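(* Let $G$ be a graph with smallest eigenvalue $\theta_{\min}(G)$ which is $s$-integrable, and let $N$ be a $\rho\times|V(G)|$ integral matrix with $A(G)+\lceil-\theta_{\min}(G)\rceil I=\frac{1}{s}N^TN$ (rows of $N$ are vectors indexed by $V(G)$). Then: \begin{enumerate} \item There is a row $\mathbf{r}$ of $N$ with $$|{\rm supp}(\mathbf{r})|\leq\frac{s\lceil-\theta_{\min}(G)\rceil\,|V(G)|}{\rho}\leq\frac{s\lceil-\theta_{\min}(G)\rceil\,|V(G)|}{{\rm rank}(N)}.$$ \item Let $\pi=\{V_1,\ldots,V_p\}$ be an equitable partition of $V(G)$ whose quotient matrix $Q_\pi$ has $\theta_{\min}(G)$ as its smallest eigenvalue. If $\theta_{\min}(G)$ is an integer, then for every row $\mathbf{r}$ of $N$ and every eigenvector $\mathbf{u}=(\mathbf{u}_1,\ldots,\mathbf{u}_p)^T$ of $Q_\pi$ with eigenvalue $\theta_{\min}(G)$, $$\sum_{i=1}^p\mathbf{u}_i\sum_{x\in V_i}\mathbf{r}_x=0.$$ \item For every row $\mathbf{r}$ of $N$, $$\sum_{x\in V(G)}\mathbf{r}_x\sum_{y\sim x}\mathbf{r}_y\;\geq\;\frac{1}{s}(\mathbf{r}\mathbf{r}^T)^2+\lfloor\theta_{\min}(G)\rfloor\,\mathbf{r}\mathbf{r}^T.$$ \item If $G'$ is an induced subgraph of $G$ with $\lfloor\theta_{\min}(G')\rfloor=\lfloor\theta_{\min}(G)\rfloor$, then $G'$ is also $s$-integrable. \end{enumerate}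
   Context: Graphs are finite, simple, undirected; $A(G)$ is the adjacency matrix and $\theta_{\min}(G)$ the smallest eigenvalue; $x\sim y$ means adjacency. ${\rm supp}(\mathbf{r})=\{i\mid \mathbf{r}_i\neq 0\}$. A graph $G$ is $s$-integrable ($s$ a positive integer) if there is an integral matrix $N$ with $A(G)-\lfloor\theta_{\min}(G)\rfloor I=\frac{1}{s}N^TN$ (equivalently, the lattice with Gram matrix $A(G)-\lfloor\theta_{\min}(G)\rfloor I$ scaled by $\sqrt{s}$ embeds in a standard lattice $\mathbb{Z}^m$). A partition $\pi=\{V_1,\ldots,V_p\}$ of $V(G)$ is equitable if for all $i,j$ every vertex of $V_i$ has the same number $q_{i,j}$ of neighbours in $V_j$; its quotient matrix is $Q_\pi=(q_{i,j})$. *)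

(* Defs.v *)
From HB Require Import structures.
From mathcomp Require Import all_boot all_order all_algebra.
From mathcomp Require Import reals.
Set Implicit Arguments. Unset Strict Implicit. Unset Printing Implicit Defensive.
Import Order.TTheory GRing.Theory Num.Theory.
Local Open Scope ring_scope.

Definition simple_graph (n : nat) (e : rel 'I_n) : Prop :=
  symmetric e /\ irreflexive e.

Definition adj_mx (R : realType) (n : nat) (e : rel 'I_n) : 'M[R]_n :=
  \matrix_(i, j) (e i j)%:R.

Definition is_min_eigenvalue (R : realType) (n : nat) (M : 'M[R]_n) (theta : R) : Prop :=
  eigenvalue M theta /\ (forall a : R, eigenvalue M a -> theta <= a).

Definition s_integrable (R : realType) (n : nat) (e : rel 'I_n) (s : nat) : Prop :=
  exists theta : R, is_min_eigenvalue (adj_mx R e) theta /\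
    exists (m : nat) (N : 'M[int]_(m, n)),
      adj_mx R e - ((Num.floor theta)%:~R)%:M
      = (s%:R)^-1 *: map_mx (fun z : int => z%:~R) (N^T *m N).

Definition supp (n : nat) (r : 'rV[int]_n) : {set 'I_n} := [set x | r 0 x != 0].

Definition is_partition (n p : nat) (f : 'I_n -> 'I_p) : Prop :=
  forall i : 'I_p, exists x : 'I_n, f x = i.

Definition nbrs_in (n p : nat) (e : rel 'I_n) (f : 'I_n -> 'I_p) (x : 'I_n) (j : 'I_p) : nat :=
  #|[set y | e x y & f y == j]|.

Definition equitable (n p : nat) (e : rel 'I_n) (f : 'I_n -> 'I_p) : Prop :=
  forall (i j : 'I_p) (x y : 'I_n), f x = i -> f y = i -> nbrs_in e f x j = nbrs_in e f y j.

Definition quotient_mx (R : realType) (n p : nat) (e : rel 'I_n) (f : 'I_n -> 'I_p) : 'M[R]_p :=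
  \matrix_(i, j) (if [pick x | f x == i] is Some x then (nbrs_in e f x j)%:R else 0).

(* Main.v *)
Require Import Defs.
From HB Require Import structures.
From mathcomp Require Import all_boot all_order all_algebra.
From mathcomp Require Import reals.
From mathcomp Require Import zify.
Import Order.TTheory GRing.Theory Num.Theory.
Local Open Scope ring_scope.

Theorem proposition3p1 (R : realType) (n : nat) (e : rel 'I_n) (s : nat)
    (theta : R) (rho : nat) (N : 'M[int]_(rho, n)) :
  simple_graph e -> (0 < s)%N ->
  is_min_eigenvalue (adj_mx R e) theta ->
  s_integrable R e s ->
  adj_mx R e + ((Num.ceil (- theta))%:~R)%:M
    = (s%:R)^-1 *: map_mx (fun z : int => z%:~R) (N^T *m N) ->
  (* 1 *)
  ((0 < rho)%N ->
    exists k : 'I_rho,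
      ((#|supp (row k N)|%:R : R) <= (s * n)%:R * (Num.ceil (- theta))%:~R / rho%:R) /\
      (((s * n)%:R * (Num.ceil (- theta))%:~R / rho%:R : R)
         <= (s * n)%:R * (Num.ceil (- theta))%:~R / (\rank (map_mx (fun z : int => z%:~R) N : 'M[R]_(rho, n)))%:R))
  /\
  (* 2 *)
  (forall (p : nat) (f : 'I_n -> 'I_p),
     is_partition f -> equitable e f ->
     is_min_eigenvalue (quotient_mx R e f) theta ->
     theta \is a Num.int ->
     forall (k : 'I_rho) (u : 'cV[R]_p),
       u != 0 -> quotient_mx R e f *m u = theta *: u ->
       \sum_(i < p) u i 0 * \sum_(x < n | f x == i) (N k x)%:~R = 0)
  /\
  (* 3 *)
  (forall k : 'I_rho,
     let r : 'rV[R]_n := map_mx (fun z : int => z%:~R) (row k N) in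
     let rr : R := (r *m r^T) 0 0 in
     \sum_(x < n) r 0 x * \sum_(y < n | e x y) r 0 y
       >= (s%:R)^-1 * rr ^+ 2 + (Num.floor theta)%:~R * rr)
  /\
  (* 4 *)
  (forall (m : nat) (g : 'I_m -> 'I_n) (theta' : R),
     injective g ->
     is_min_eigenvalue (adj_mx R (fun a b => e (g a) (g b))) theta' ->
     Num.floor theta' = Num.floor theta ->
     s_integrable R (fun a b => e (g a) (g b)) s).
Proof.
move=> [Esym Eirr] s_gt0 Hmin _ H.
set c := Num.ceil (- theta).
set C : R := c%:~R.
set Nr : 'M[R]_(rho, n) := map_mx (fun z : int => z%:~R) N.
have H' : adj_mx R e + C%:M = s%:R^-1 *: (Nr^T *m Nr) by rewrite H map_mxM map_trmx.
have sne0 : (s%:R : R) != 0 by rewrite pnatr_eq0 -lt0n.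
have HE : forall x y, (e x y)%:R + C *+ (x == y) = s%:R^-1 * \sum_k Nr k x * Nr k y.
  move=> x y; have := congr1 (fun M : 'M[R]_n => M x y) H'; rewrite !mxE /= => ->.
  by congr (_ * _); apply: eq_bigr => j _; rewrite !mxE.
have Hfl : (Num.floor theta)%:~R = - C :> R by rewrite floorNceil intrN.
have HA : adj_mx R e = s%:R^-1 *: (Nr^T *m Nr) - C%:M by rewrite -H' addrK.
have Hdiag : forall x, \sum_k Nr k x * Nr k x = s%:R * C.
  move=> x; have := HE x x; rewrite Eirr eqxx add0r mulr1n => ->.
  by rewrite mulrA divff // mul1r.
split.
  move=> rho_gt0.
  have Hsupp : forall k, (#|supp (row k N)|%:R : R) <= \sum_x Nr k x * Nr k x.
    move=> k; rewrite /supp -sum1_card natr_sum big_mkcond /=; apply: ler_sum => x _.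
    rewrite inE !mxE; case: eqP => [->|/eqP nz]; first by rewrite mulr0.
    rewrite -intrM ler1z; move: nz; lia.
  have Htot : \sum_k \sum_x Nr k x * Nr k x = (s * n)%:R * C.
    rewrite exchange_big /= (eq_bigr (fun _ => s%:R * C)) => [|x _]; last exact: Hdiag.
    by rewrite sumr_const card_ord natrM mulrAC mulr_natr.
  case: (arg_minnP (fun k : 'I_rho => #|supp (row k N)|) (isT : xpredT (Ordinal rho_gt0))) => k0 _ Hk0.
  exists k0; split.
    rewrite ler_pdivlMr ?ltr0n //.
    have <- : \sum_(k < rho) (#|supp (row k0 N)|%:R : R) = #|supp (row k0 N)|%:R * rho%:R.
      by rewrite sumr_const card_ord mulr_natr.
    apply: le_trans (_ : \sum_(k < rho) (#|supp (row k N)|%:R : R) <= _).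
      by apply: ler_sum => k _; rewrite ler_nat; exact: Hk0.
    by rewrite -Htot; apply: ler_sum => k _; exact: Hsupp.
  have T0 : 0 <= (s * n)%:R * C.
    rewrite -Htot; apply: sumr_ge0 => k _; apply: sumr_ge0 => x _.
    by rewrite -expr2 sqr_ge0.
  case: (posnP (\rank Nr)) => [r0|rpos].
    have Nr0 : Nr = 0 by apply/eqP; rewrite -mxrank_eq0 r0.
    have -> : (s * n)%:R * C = 0.
      by rewrite -Htot big1 // => k _; rewrite big1 // => x _; rewrite Nr0 mxE mul0r.
    by rewrite !mul0r.
  rewrite ler_wpM2l // lef_pV2 ?posrE ?ltr0n // ler_nat; exact: rank_leq_row.
split.
  move=> p f _ Heq _ Hint k u _ Hu.
  have HC : C = - theta.
    by rewrite /C /c ceilK // rpredN.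
  set w : 'cV[R]_n := \col_x u (f x) 0.
  have Hw : adj_mx R e *m w = theta *: w.
    apply/matrixP => x j; rewrite (ord1 j) !mxE.
    have := congr1 (fun M : 'cV[R]_p => M (f x) 0) Hu; rewrite !mxE => <-.
    rewrite (partition_big f xpredT) //=; apply: eq_bigr => i _.
    have -> : quotient_mx R e f (f x) i = (nbrs_in e f x i)%:R.
      rewrite mxE; case: pickP => [z /eqP hz | /(_ x)]; last by rewrite eqxx.
      by rewrite (Heq _ _ z x hz erefl).
    rewrite /nbrs_in -sum1_card natr_sum mulr_suml [RHS]big_mkcond [LHS]big_mkcond /=.
    apply: eq_bigr => y _; rewrite !mxE inE.
    case: eqP => [<-|] //=; case: (e x y); by rewrite ?mul1r ?mul0r.
  have HN : Nr^T *m Nr *m w = 0.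
    have HA2 : Nr^T *m Nr = s%:R *: (adj_mx R e + C%:M).
      by rewrite H' scalerA divff // scale1r.
    rewrite HA2 -scalemxAl mulmxDl Hw mul_scalar_mx -scalerDl HC subrr scale0r scaler0.
    by [].
  set v := Nr *m w.
  have Hv : v^T *m v = 0 by rewrite /v trmx_mul -!mulmxA (mulmxA Nr^T) HN !mulmx0.
  have Hsq : \sum_j v j 0 ^+ 2 = 0.
    have Ev : (v^T *m v) 0 0 = 0 by rewrite Hv mxE.
    by rewrite -[RHS]Ev mxE; apply: eq_bigr => j _; rewrite [v^T 0 j]mxE expr2.
  have Hvk : v k 0 = 0.
    apply/eqP; rewrite -sqrf_eq0; apply/eqP.
    by apply: (psumr_eq0P _ Hsq) => // j _; exact: sqr_ge0.
  rewrite -[RHS]Hvk /v mxE (partition_big f xpredT) //=; apply: eq_bigr => i _.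
  rewrite mulr_sumr; apply: eq_bigr => x /eqP fx; rewrite !mxE fx mulrC.
  by [].
split.
  move=> k; cbv zeta.
  set r := map_mx _ (row k N).
  set rr := (r *m r^T) 0 0.
  have Er : r = row k Nr by rewrite /r map_row.
  have LHS : \sum_(x < n) r 0 x * \sum_(y < n | e x y) r 0 y = (r *m adj_mx R e *m r^T) 0 0.
    rewrite [RHS]mxE; apply: eq_bigr => x _.
    rewrite [RHS]mulrC [r^T x 0]mxE [(r *m _) 0 x]mxE; congr (_ * _).
    rewrite big_mkcond /=; apply: eq_bigr => y _; rewrite [adj_mx R e y x]mxE (Esym y x).
    by case: (e x y); rewrite ?mulr1 ?mulr0.
  rewrite LHS HA mulmxBr mulmxBl -scalemxAr -scalemxAl mul_mx_scalar -scalemxAl.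
  set w := Nr *m r^T.
  have Ew : r *m (Nr^T *m Nr) *m r^T = w^T *m w by rewrite /w trmx_mul trmxK !mulmxA.
  have Err : \sum_j r 0 j * r^T j 0 = rr by rewrite /rr mxE.
  rewrite Ew !mxE Err Hfl mulNr.
  have Wk : w k 0 = rr by rewrite /rr /w !mxE; apply: eq_bigr => x _; rewrite !mxE.
  have -> : \sum_j w^T 0 j * w j 0 = \sum_j w j 0 ^+ 2 by apply: eq_bigr => j _; rewrite mxE.
  rewrite lerD2r ler_wpM2l ?invr_ge0 ?ler0n //.
  rewrite (bigD1 k) //= Wk lerDl; apply: sumr_ge0 => j _; exact: sqr_ge0.
move=> m g theta' ginj Hmin' Hfl'.
exists theta'; split=> //.
exists rho, (\matrix_(k, a) N k (g a)).
rewrite map_mxM -map_trmx; apply/matrixP => a b.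
have := HE (g a) (g b); rewrite (inj_eq ginj) => HEab.
rewrite !mxE Hfl' Hfl mulNrn opprK HEab; congr (_ * _).
by apply: eq_bigr => j _; rewrite !mxE.
Qed.
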